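(* Let $F$ and $G$ be experiments on the state space $\Theta=\{\theta_0,\ldots,\theta_n\}$ with densities $f(\cdot\mid\theta)$ on $\mathcal{X}$ and $g(\cdot\mid\theta)$ on $\mathcal{Y}$, and assume $f(x\mid\theta_0)>0$ for all $x\in\mathcal{X}$ and $g(y\mid\theta_0)>0$ for all $y\in\mathcal{Y}$. Then $F\succeq_{\textup{LB}}G$ if and only if $\boldsymbol{\ell}_F\succeq_{\textup{lcx}}\boldsymbol{\ell}_G$.
   Context: States: $\Theta=\{\theta_0,\ldots,\theta_n\}\subset\mathbb{R}$. An experiment $F$ specifies, for each $\theta$, an absolutely continuous distribution $F(\cdot\mid\theta)$ with density $f(\cdot\mid\theta)$ of a signal $X$ in a compact interval $\mathcal{X}$; likewise $G$ with densities $g(\cdot\mid\theta)$ of a signal $Y$ in a compact interval $\mathcal{Y}$. Let $\widehat{\Delta}_n=\{\boldsymbol{q}\in[0,1]^n:\sum_{i=1}^n q_i\le1\}$; a prior $\boldsymbol{q}$ puts probability $q_i$ on $\theta_i$, $i\ge1$, and $q_0=1-\sum_i q_i$ on $\theta_0$. The posterior vector is $\boldsymbol{p}_F(x;\boldsymbol{q})=(p_{F,i}(x;\boldsymbol{q}))_{i=1}^n$ with $p_{F,i}(x;\boldsymbol{q})=q_if(x\mid\theta_i)/\sum_{j=0}^nq_jf(x\mid\theta_j)$, and $\boldsymbol{p}_F(\boldsymbol{q})$ is the random vector $\boldsymbol{p}_F(X;\boldsymbol{q})$ with $X$ distributed according to the unconditional distribution $\sum_j q_jF(\cdot\mid\theta_j)$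 (analogously for $G$). For random vectors with equal means, $\boldsymbol{\mu}\succeq_{\textup{cx}}\boldsymbol{\nu}$ means $\mathbb{E}[C(\boldsymbol{\mu})]\ge\mathbb{E}[C(\boldsymbol{\nu})]$ for all convex $C$, and $\boldsymbol{\mu}\succeq_{\textup{lcx}}\boldsymbol{\nu}$ means $\boldsymbol{b}\cdot\boldsymbol{\mu}\succeq_{\textup{cx}}\boldsymbol{b}\cdot\boldsymbol{\nu}$ for all $\boldsymbol{b}\in\mathbb{R}^n$. $F\succeq_{\textup{LB}}G$ means $\boldsymbol{p}_F(\boldsymbol{q})\succeq_{\textup{lcx}}\boldsymbol{p}_G(\boldsymbol{q})$ for all $\boldsymbol{q}\in\widehat{\Delta}_n$. Likelihood ratios: $l_{F,i}(x)=f(x\mid\theta_i)/f(x\mid\theta_0)$, $\boldsymbol{\ell}_F(x)=(l_{F,1}(x),\ldots,l_{F,n}(x))$, and $\boldsymbol{\ell}_F$ denotes the random vector $\boldsymbol{\ell}_F(X)$ with $X\sim F(\cdot\mid\theta_0)$; analogously $\boldsymbol{\ell}_G=\boldsymbol{\ell}_G(Y)$ with $Y\sim G(\cdot\mid\theta_0)$, $l_{G,i}=g(\cdot\mid\theta_i)/g(\cdot\mid\theta_0)$. *)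

(* Defs.v *)
From HB Require Import structures.
From mathcomp Require Import all_boot all_order all_algebra.
From mathcomp Require Import all_classical all_reals all_analysis.
Set Implicit Arguments. Unset Strict Implicit. Unset Printing Implicit Defensive.
Import Order.TTheory GRing.Theory Num.Theory.
Local Open Scope classical_set_scope.
Local Open Scope ring_scope.

Section Defs.
Variable R : realType.

Definition convex_fun (phi : R -> R) : Prop :=
  forall x y t : R, 0 <= t -> t <= 1 ->
    phi (t * x + (1 - t) * y) <= t * phi x + (1 - t) * phi y.

(* An experiment with states theta_0..theta_n (indexed by 'I_n.+1), signal
   in the compact interval [a,b], densities f i (w.r.t. Lebesgue measure). *)
Definition is_experiment (n : nat) (a b : R) (f : 'I_n.+1 -> R -> R) : Prop :=
  forall i : 'I_n.+1,
    measurable_fun `[a, b] (f i) /\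
    (forall x, x \in `[a, b] -> 0 <= f i x) /\
    (\int[@lebesgue_measure R]_(x in `[a, b]) (f i x)%:E = 1)%E.

Definition Edens (a b : R) (w : R -> R) (Z : R -> R) : \bar R :=
  \int[@lebesgue_measure R]_(x in `[a, b]) (Z x * w x)%:E.

(* Convex order for real random variables Z(X) (X ~ w on [a,b]) and
   W(Y) (Y ~ v on [c,d]):  Z(X) >=_cx W(Y). *)
Definition cx_ge (a b : R) (w Z : R -> R) (c d : R) (v W : R -> R) : Prop :=
  forall phi : R -> R, convex_fun phi ->
    (Edens c d v (phi \o W) <= Edens a b w (phi \o Z))%E.

Definition lcx_ge (n : nat) (a b : R) (w : R -> R) (Z : R -> 'I_n -> R)
    (c d : R) (v : R -> R) (W : R -> 'I_n -> R) : Prop :=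
  forall bv : 'I_n -> R,
    cx_ge a b w (fun x => \sum_(i < n) bv i * Z x i)
          c d v (fun y => \sum_(i < n) bv i * W y i).

(* Priors: q in the "hat simplex"; q i is the mass on theta_{i+1}. *)
Definition hat_simplex (n : nat) (q : 'I_n -> R) : Prop :=
  (forall i, 0 <= q i <= 1) /\ \sum_(i < n) q i <= 1.

Definition full_prior (n : nat) (q : 'I_n -> R) (j : 'I_n.+1) : R :=
  match unlift ord0 j with
  | None => 1 - \sum_(i < n) q i
  | Some i => q i
  end.

Definition uncond (n : nat) (f : 'I_n.+1 -> R -> R) (q : 'I_n -> R) (x : R) : R :=
  \sum_(j < n.+1) full_prior q j * f j x.

Definition posterior (n : nat) (f : 'I_n.+1 -> R -> R) (q : 'I_n -> R)
    (x : R) (i : 'I_n) : R :=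
  q i * f (lift ord0 i) x / uncond f q x.

Definition LB_ge (n : nat) (a b : R) (f : 'I_n.+1 -> R -> R)
    (c d : R) (g : 'I_n.+1 -> R -> R) : Prop :=
  forall q : 'I_n -> R, hat_simplex q ->
    lcx_ge a b (uncond f q) (posterior f q) c d (uncond g q) (posterior g q).

Definition lratio (n : nat) (f : 'I_n.+1 -> R -> R) (x : R) (i : 'I_n) : R :=
  f (lift ord0 i) x / f ord0 x.

End Defs.

(* Main.v *)
Require Import Defs.
From HB Require Import structures.
From mathcomp Require Import all_boot all_order all_algebra.
From mathcomp Require Import all_classical all_reals all_analysis.
From mathcomp Require Import measurable_realfun.
From mathcomp Require Import ring lra.
Set Implicit Arguments. Unset Strict Implicit.
Import Order.TTheory GRing.Theory Num.Theory.
Import numFieldNormedType.Exports.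
Local Open Scope classical_set_scope.
Local Open Scope ring_scope.

Local Close Scope ereal_scope.
Local Open Scope ring_scope.
Section Cvx.
Variable R : realType.
Variable phi : R -> R.
Hypothesis cphi : convex_fun phi.

Lemma cvx3 (x y z : R) : x < y -> y < z ->
  (z - x) * phi y <= (z - y) * phi x + (y - x) * phi z.
Proof.
move=> xy yz.
have zx : 0 < z - x by rewrite subr_gt0; exact: lt_trans yz.
set t := (z - y) / (z - x).
have t0 : 0 <= t by apply: divr_ge0; lra.
have t1 : t <= 1 by rewrite /t ler_pdivrMr //; lra.
have := @cphi x z t t0 t1.
have -> : t * x + (1 - t) * z = y.
  rewrite /t; field; lra.
move=> H.
have := ler_wpM2l (ltW zx) H.
have -> : (z - x) * (t * phi x + (1 - t) * phi z) = (z - y) * phi x + (y - x) * phi z.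
  rewrite /t; field; lra.
by [].
Qed.

Definition slope (x y : R) := (phi y - phi x) / (y - x).

Lemma slope_mid (y x z : R) : y < x -> x < z -> slope y x <= slope x z.
Proof.
move=> yx xz; have H := @cvx3 y x z yx xz.
rewrite /slope ler_pdivrMr ?subr_gt0 // mulrAC ler_pdivlMr ?subr_gt0 //.
nra.
Qed.

Definition rdset (x : R) := [set s | exists2 h, 0 < h & s = slope x (x + h)].
Definition rd (x : R) := inf (rdset x).

Lemma rdset_lb x : lbound (rdset x) (slope (x - 1) x).
Proof.
move=> s [h h0 ->]; apply: slope_mid; lra.
Qed.

Lemma rd_le (x y : R) : x < y -> rd x <= slope x y.
Proof.
move=> xy; apply: ge_inf; first by exists (slope (x - 1) x); exact: rdset_lb.
by exists (y - x); [lra | congr slope; ring].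
Qed.

Lemma slope_le_rd (y x : R) : y < x -> slope y x <= rd x.
Proof.
move=> yx; apply: lb_le_inf; first by exists (slope x (x + 1)); exists 1.
by move=> s [h h0 ->]; apply: slope_mid; lra.
Qed.

Definition T (x r : R) := phi x + rd x * (r - x).

Lemma T_le x r : T x r <= phi r.
Proof.
rewrite /T; have [xr|rx|<-] := ltgtP x r; last by lra.
- have := @rd_le x r xr; rewrite /slope ler_pdivlMr ?subr_gt0 //; nra.
- have := @slope_le_rd r x rx; rewrite /slope ler_pdivrMr ?subr_gt0 //; nra.
Qed.

Lemma rd_mono x y : x <= y -> rd x <= rd y.
Proof.
rewrite le_eqVlt => /orP[/eqP -> //|xy].
apply: le_trans (@rd_le x y xy) (@slope_le_rd x y xy).
Qed.

Lemma Tdiff_ge x y r : x <= y -> y <= r -> 0 <= T y r - T x r.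
Proof.
move=> xy yr; have h1 := T_le x y; have h2 := rd_mono xy.
have -> : T y r - T x r = (phi y - T x y) + (rd y - rd x) * (r - y).
  by rewrite /T; ring.
apply: addr_ge0; first lra.
apply: mulr_ge0; lra.
Qed.

Lemma Tdiff_le x y r : x <= y -> r <= x -> T y r - T x r <= 0.
Proof.
move=> xy rx; have h1 := T_le y x; have h2 := rd_mono xy.
have -> : T y r - T x r = (T y x - phi x) + (rd y - rd x) * (r - x).
  by rewrite /T; ring.
have : (rd y - rd x) * (r - x) <= 0 by apply: mulr_ge0_le0; lra.
lra.
Qed.

Section Psi.
Variable xs : nat -> R.
Hypothesis xs_nd : forall j, xs j <= xs j.+1.

Definition psi (m : nat) (r : R) :=
  T (xs 0) r + \sum_(j < m) Num.max (T (xs j.+1) r - T (xs j) r) 0.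

Lemma psiS m r : psi m.+1 r = psi m r + Num.max (T (xs m.+1) r - T (xs m) r) 0.
Proof. by rewrite /psi big_ord_recr /= addrA. Qed.

Lemma xs_mono i j : (i <= j)%N -> xs i <= xs j.
Proof.
move=> /subnK <-; elim: (j - i)%N => [|k IH] //=.
by rewrite addSn; apply: le_trans IH (xs_nd _).
Qed.

Lemma psi_le m r : psi m r <= phi r /\ (xs m <= r -> psi m r = T (xs m) r).
Proof.
elim: m => [|m [IH1 IH2]].
  by rewrite /psi big_ord0 addr0; split => //; exact: T_le.
rewrite psiS; split; last first.
  move=> hr; have hm : xs m <= r by apply: le_trans hr.
  rewrite IH2 // max_l; first by ring.
  by apply: Tdiff_ge.
have [hr|hr] := leP (xs m) r.
  rewrite IH2 //.
  have [h|h] := leP (T (xs m.+1) r - T (xs m) r) 0.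
    by rewrite addr0; exact: T_le.
  by rewrite addrC subrK; exact: T_le.
rewrite max_r ?addr0 //; apply: Tdiff_le => //; exact: ltW.
Qed.

Lemma psi_ge m j r : (j <= m)%N -> T (xs j) r <= psi m r.
Proof.
elim: m j => [|m IH] j.
  by rewrite leqn0 => /eqP ->; rewrite /psi big_ord0 addr0.
rewrite psiS leq_eqVlt => /orP[/eqP ->|hj].
  have := IH m (leqnn m); have : T (xs m.+1) r - T (xs m) r <= Num.max (T (xs m.+1) r - T (xs m) r) 0 by rewrite le_max lexx.
  lra.
have := IH j hj; have : 0 <= Num.max (T (xs m.+1) r - T (xs m) r) 0 by rewrite le_max lexx orbT.
lra.
Qed.

Lemma bracket m (r h : R) : 0 <= h -> (forall j, xs j.+1 - xs j <= h) ->
  xs 0 <= r -> r <= xs m -> exists j, [/\ (j <= m)%N, xs j <= r & r - xs j <= h].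
Proof.
move=> h0 hs r0; elim: m => [|m IH] rm.
  by exists 0%N; split => //; lra.
have [rm'|rm'] := leP r (xs m).
  by have [j [jm ? ?]] := IH rm'; exists j; split => //; exact: leqW.
exists m; split => //; first exact: ltW.
have := hs m; lra.
Qed.
End Psi.

Definition gx (N : nat) (j : nat) : R := j%:R / N.+1%:R - N%:R.
Definition gm (N : nat) : nat := (2 * N * N.+1)%N.
Definition psiN N r := psi (gx N) (gm N) r.

Lemma gx_step N j : gx N j.+1 - gx N j = N.+1%:R^-1.
Proof. rewrite /gx -addn1 natrD; field; by rewrite addrC natr1 pnatr_eq0. Qed.

Lemma gx_nd N j : gx N j <= gx N j.+1.
Proof.
by rewrite -subr_ge0 gx_step invr_ge0 ler0n.
Qed.

Lemma psiN_le N r : psiN N r <= phi r.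
Proof. exact: (psi_le (@gx_nd N) _ r).1. Qed.

Lemma psiN_T0 N r : T 0 r <= psiN N r.
Proof.
have -> : 0 = gx N (N * N.+1)%N.
  rewrite /gx natrM; field; by rewrite addrC natr1 pnatr_eq0.
apply: (psi_ge (gx N)).
by rewrite /gm -mulnA leq_pmull.
Qed.

Lemma T_lb x r : x <= r -> r - 1 <= x ->
  phi r - (rd r - rd (r - 1)) * (r - x) <= T x r.
Proof.
move=> xr rx.
have h1 := T_le r x; have h2 := rd_mono rx.
have : (rd r - rd x) * (r - x) <= (rd r - rd (r - 1)) * (r - x).
  by apply: ler_wpM2r; lra.
rewrite /T in h1 *; nra.
Qed.

Lemma psiN_lb N r : `|r| <= N%:R ->
  phi r - (rd r - rd (r - 1)) * N.+1%:R^-1 <= psiN N r.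
Proof.
move=> rN.
have hp : 0 < N.+1%:R^-1 :> R by rewrite invr_gt0 ltr0Sn.
have h1 : N.+1%:R^-1 <= 1 :> R by rewrite invf_le1 ?ltr0Sn // ler1n.
have [j [jm xj rj]] : exists j, [/\ (j <= gm N)%N, gx N j <= r & r - gx N j <= N.+1%:R^-1].
  apply: bracket; first exact: ltW.
  - by move=> j; rewrite gx_step.
  - rewrite /gx mul0r; have := ler_norm (- r); rewrite normrN; lra.
  - have -> : gx N (gm N) = N%:R.
      rewrite /gx /gm !natrM; field; by rewrite addrC natr1 pnatr_eq0.
    have := ler_norm r; lra.
have r1 : r - 1 <= r by lra.
have K0 : 0 <= rd r - rd (r - 1) by rewrite subr_ge0; apply: rd_mono.
have rj1 := le_trans rj h1.
have rx : r - 1 <= gx N j by lra.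
have := T_lb xj rx.
have := psi_ge (gx N) r jm.
have : (rd r - rd (r - 1)) * (r - gx N j) <= (rd r - rd (r - 1)) * N.+1%:R^-1.
  by apply: ler_wpM2l.
rewrite /psiN; set K := rd r - rd (r - 1); set y := r - gx N j; set h := N.+1%:R^-1.
set P := psi (gx N) (gm N) r; set U := T (gx N j) r; nra.
Qed.

Lemma psiN_cvg r : (fun N => psiN N r) @ \oo --> phi r.
Proof.
pose lo N := phi r - (rd r - rd (r - 1)) * harmonic N.
have Hlo : lo @ \oo --> phi r.
  rewrite -[X in _ --> X]subr0; apply: cvgB; first exact: cvg_cst.
  rewrite -(mulr0 (rd r - rd (r - 1))); apply: cvgZ; first exact: cvg_cst.
  exact: cvg_harmonic.
have Hn : \forall N \near \oo, lo N <= psiN N r <= phi r.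
  near=> N; rewrite psiN_le andbT; apply: psiN_lb.
  near: N; exact: nbhs_infty_ger.
exact: (squeeze_cvgr Hn Hlo (cvg_cst _)).
Unshelve. all: by end_near.
Qed.
End Cvx.

Local Close Scope ereal_scope.
Local Open Scope ring_scope.
Local Open Scope ereal_scope.
Section S1.
Variable R : realType.
Notation mu := (@lebesgue_measure R).

Lemma aux_pos (e : \bar R) (y : R) : 0 <= e -> e <= maxe (e + y%:E) 0 + `|y|%:E.
Proof.
case: e => [r| |] //= r0.
  rewrite -EFinD -EFin_max -EFinD lee_fin.
  have := ler_norm y; have := ler_norm (- y); rewrite normrN.
  rewrite lee_fin in r0.
  have [h|h] := leP 0%R (r + y)%R; lra.
Qed.

Lemma aux_neg (e : \bar R) (y : R) : 0 <= e -> maxe (- (e + y%:E)) 0 <= `|y|%:E.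
Proof.
case: e => [r| |] //= r0.
  rewrite -EFin_max lee_fin.
  have := ler_norm y; have := ler_norm (- y); rewrite normrN.
  rewrite lee_fin in r0.
  have [h|h] := leP (- (r + y))%R 0%R; lra.
by rewrite max_r ?leNye // lee_fin normr_ge0.
Qed.

Lemma int_addr (D : set R) (mD : measurable D) (f : R -> \bar R) (g : R -> R) :
  measurable_fun D f -> (forall x, D x -> 0 <= f x) -> mu.-integrable D (EFin \o g) ->
  \int[mu]_(x in D) (f x + (g x)%:E) = \int[mu]_(x in D) f x + \int[mu]_(x in D) (g x)%:E.
Proof.
move=> mf f0 ig.
have [if_|nif] := pselect (mu.-integrable D f).
  by rewrite integralD.
have foo : \int[mu]_(x in D) f x = +oo.
  apply/eqP; rewrite eq_le leey /= leNgt; apply/negP => flt; apply: nif.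
  apply/integrableP; split => //.
  suff -> : \int[mu]_(x in D) `|f x| = \int[mu]_(x in D) f x by [].
  by apply: eq_integral => x /[!inE] Dx; rewrite gee0_abs // f0.
have mg : measurable_fun D (EFin \o g) by exact: measurable_int ig.
have gfin : \int[mu]_(x in D) (g x)%:E \is a fin_num by exact: integrable_fin_num.
rewrite foo; have [gi gE] : exists r : R, \int[mu]_(x in D) (g x)%:E = r%:E.
  by exists (fine (\int[mu]_(x in D) (g x)%:E)); rewrite fineK.
rewrite gE /=.
set h := fun x => f x + (g x)%:E.
have mh : measurable_fun D h by exact: emeasurable_funD.
have absg : \int[mu]_(x in D) `|(g x)%:E| < +oo.
  by move/integrableP : ig => [].
have hp : \int[mu]_(x in D) h^\+ x = +oo.
  have : \int[mu]_(x in D) f x <= \int[mu]_(x in D) (h^\+ x + `|(g x)%:E|).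
    apply: ge0_le_integral => //.
    - apply: emeasurable_funD; first exact: measurable_funepos.
      exact: measurableT_comp.
    - by move=> x Dx; rewrite funeposE; apply: aux_pos; exact: f0.
  rewrite foo ge0_integralD //; last 2 first.
  - exact: measurable_funepos.
  - exact: measurableT_comp.
  move=> H; apply/eqP; move: H; apply: contraTT => hne.
  rewrite -ltNge; apply: lte_add_pinfty => //.
  by rewrite lt_neqAle hne leey.
have hn : \int[mu]_(x in D) h^\- x < +oo.
  apply: le_lt_trans absg; apply: ge0_le_integral => //;
    try by [move=> x _; exact: funeneg_ge0 | exact: measurable_funeneg | exact: measurableT_comp].
  by move=> x Dx; rewrite funenegE; apply: aux_neg; exact: f0.
rewrite integralE hp; move: hn.
have : 0 <= \int[mu]_(x in D) h^\- x by apply: integral_ge0 => x _; exact: funeneg_ge0.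
by case: (\int[mu]_(x in D) h^\- x).
Qed.
End S1.

Local Close Scope ereal_scope.
Local Open Scope ring_scope.

Lemma maxr0M (R : realType) (y w : R) : 0 <= w -> Num.max y 0 * w = Num.max (y * w) 0.
Proof.
move=> w0; have [h|h] := leP 0 y.
  by rewrite max_l // mulr_ge0.
by rewrite max_r ?mul0r // mulr_le0_ge0 // ltW.
Qed.

Local Open Scope ereal_scope.
Section Integ.
Variable R : realType.
Notation mu := (@lebesgue_measure R).
Variables (D : set R) (w Z : R -> R).
Hypothesis mD : measurable D.
Hypotheses (w0 : forall x, D x -> (0 <= w x)%R) (iw : mu.-integrable D (EFin \o w))
  (iZ : mu.-integrable D (EFin \o (fun x => Z x * w x)%R)).

Lemma int_aff (g e : R) : mu.-integrable D (EFin \o (fun x => (g * Z x + e) * w x)%R).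
Proof.
have H : mu.-integrable D (fun x => g%:E * (Z x * w x)%:E + e%:E * (w x)%:E).
  apply: integrableD => //; exact: integrableZl.
apply: eq_integrable H => // x _ /=; rewrite -!EFinM -EFinD; congr EFin; ring.
Qed.

Lemma int_relu (g e : R) : mu.-integrable D (EFin \o (fun x => Num.max (g * Z x + e) 0 * w x)%R).
Proof.
apply: le_integrable (int_aff g e) => //.
  apply/measurable_EFinP.
  have H : measurable_fun D (fun x => Num.max (g * (Z x * w x) + e * w x) 0)%R.
    apply: measurable_maxr => //.
    apply: measurable_funD.
      apply: measurable_funM => //; apply/measurable_EFinP; exact: measurable_int iZ.
    apply: measurable_funM => //; apply/measurable_EFinP; exact: measurable_int iw.
  apply: eq_measurable_fun H => x /[!inE] Dx; rewrite maxr0M ?w0 //; congr Num.max; ring.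
move=> x Dx /=. rewrite lee_fin !normrM ler_wpM2r //.
have [h|h] := leP 0%R (g * Z x + e)%R => //.
by rewrite normr0.
Qed.
End Integ.

Local Close Scope ereal_scope.
Local Open Scope ring_scope.
Local Open Scope ereal_scope.
Section CL.
Variable R : realType.
Notation mu := (@lebesgue_measure R).
Variables (a b c d : R) (w Z v W : R -> R).
Hypotheses (w0 : forall x, `[a, b]%classic x -> (0 <= w x)%R) (iw : mu.-integrable `[a, b]%classic (EFin \o w))
  (iZ : mu.-integrable `[a, b]%classic (EFin \o (fun x => Z x * w x)%R)).
Hypotheses (v0 : forall x, `[c, d]%classic x -> (0 <= v x)%R) (iv : mu.-integrable `[c, d]%classic (EFin \o v))
  (iW : mu.-integrable `[c, d]%classic (EFin \o (fun x => W x * v x)%R)).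
Hypothesis Hrelu : forall g e : R,
  Edens c d v ((fun r => Num.max (g * r + e) 0)%R \o W) <=
  Edens a b w ((fun r => Num.max (g * r + e) 0)%R \o Z).
Hypothesis Hlin : forall g e : R,
  Edens c d v ((fun r => g * r + e)%R \o W) = Edens a b w ((fun r => g * r + e)%R \o Z).

Definition goodf (rho : R -> R) :=
  [/\ mu.-integrable `[a, b]%classic (EFin \o (fun x => rho (Z x) * w x)%R),
      mu.-integrable `[c, d]%classic (EFin \o (fun x => rho (W x) * v x)%R) &
      Edens c d v (rho \o W) <= Edens a b w (rho \o Z)].

Lemma good_aff g e : goodf (fun r => g * r + e)%R.
Proof.
split; [exact: int_aff|exact: int_aff|by rewrite Hlin].
Qed.

Lemma good_relu g e : goodf (fun r => Num.max (g * r + e) 0)%R.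
Proof.
split; [exact: int_relu|exact: int_relu|exact: Hrelu].
Qed.

Lemma good_add r1 r2 : goodf r1 -> goodf r2 -> goodf (fun r => r1 r + r2 r)%R.
Proof.
move=> [i1 j1 h1] [i2 j2 h2]; split.
- apply: eq_integrable (integrableD _ i1 i2) => //= x _.
  by rewrite -EFinD mulrDl.
- apply: eq_integrable (integrableD _ j1 j2) => //= x _.
  by rewrite -EFinD mulrDl.
have E1 : Edens c d v ((fun r => r1 r + r2 r)%R \o W) = Edens c d v (r1 \o W) + Edens c d v (r2 \o W).
  rewrite /Edens -integralD //; apply: eq_integral => x _ /=; by rewrite mulrDl EFinD.
have E2 : Edens a b w ((fun r => r1 r + r2 r)%R \o Z) = Edens a b w (r1 \o Z) + Edens a b w (r2 \o Z).
  rewrite /Edens -integralD //; apply: eq_integral => x _ /=; by rewrite mulrDl EFinD.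
rewrite E1 E2; exact: leeD.
Qed.

Lemma good_ext r1 r2 : (forall r, r1 r = r2 r) -> goodf r1 -> goodf r2.
Proof. by move=> h; have -> : r1 = r2 by apply: funext. Qed.

Lemma good_psi (phi : R -> R) xs m : goodf (fun r => psi phi xs m r - T phi 0 r)%R.
Proof.
elim: m => [|m IH].
  apply: good_ext (good_aff (rd phi (xs 0%N) - rd phi 0)%R (phi (xs 0%N) - rd phi (xs 0%N) * xs 0%N - phi 0)%R).
  by move=> r; rewrite /psi big_ord0 addr0 /T; ring.
apply: good_ext (good_add IH (good_relu (rd phi (xs m.+1) - rd phi (xs m))%R
   (phi (xs m.+1) - rd phi (xs m.+1) * xs m.+1 - phi (xs m) + rd phi (xs m) * xs m)%R)).
move=> r; rewrite psiS /T.
rewrite [in RHS]addrAC; apply: f_equal2; first by ring.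
by congr Num.max; ring.
Qed.

Lemma CL_main : cx_ge a b w Z c d v W.
Proof.
move=> phi cphi.
have mD1 : measurable (`[a, b]%classic : set R) by [].
have mD2 : measurable (`[c, d]%classic : set R) by [].
pose gv N x := ((psiN phi N (W x) - T phi 0 (W x)) * v x)%R%:E.
pose gw N x := ((psiN phi N (Z x) - T phi 0 (Z x)) * w x)%R%:E.
pose cv x := ((phi (W x) - T phi 0 (W x)) * v x)%R%:E.
pose cw x := ((phi (Z x) - T phi 0 (Z x)) * w x)%R%:E.
have gd N := good_psi phi (gx R N) (gm N).
have mgv N : measurable_fun `[c, d]%classic (gv N).
  by case: (gd N) => _ /measurable_int + _; apply.
have mgw N : measurable_fun `[a, b]%classic (gw N).
  by case: (gd N) => /measurable_int + _ _; apply.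
have gv0 N x : `[c, d]%classic x -> 0 <= gv N x.
  move=> Dx; rewrite lee_fin mulr_ge0 ?v0 // subr_ge0; exact: psiN_T0.
have gw0 N x : `[a, b]%classic x -> 0 <= gw N x.
  move=> Dx; rewrite lee_fin mulr_ge0 ?w0 // subr_ge0; exact: psiN_T0.
have cvv x : `[c, d]%classic x -> gv ^~ x @ \oo --> cv x.
  move=> Dx; apply: cvg_EFin; first by near=> N.
  apply: cvgMr_tmp; apply: cvgB; [exact: psiN_cvg|exact: cvg_cst].
have cvw x : `[a, b]%classic x -> gw ^~ x @ \oo --> cw x.
  move=> Dx; apply: cvg_EFin; first by near=> N.
  apply: cvgMr_tmp; apply: cvgB; [exact: psiN_cvg|exact: cvg_cst].
have mcv : measurable_fun `[c, d]%classic cv := emeasurable_fun_cvg gv cv mgv cvv.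
have mcw : measurable_fun `[a, b]%classic cw := emeasurable_fun_cvg gw cw mgw cvw.
have cv0 x : `[c, d]%classic x -> 0 <= cv x.
  move=> Dx; rewrite lee_fin mulr_ge0 ?v0 // subr_ge0; exact: T_le.
have cw0 x : `[a, b]%classic x -> 0 <= cw x.
  move=> Dx; rewrite lee_fin mulr_ge0 ?w0 // subr_ge0; exact: T_le.
have key : \int[mu]_(x in `[c, d]%classic) cv x <= \int[mu]_(x in `[a, b]%classic) cw x.
  have -> : \int[mu]_(x in `[c, d]%classic) cv x =
      \int[mu]_(x in `[c, d]%classic) limn_einf (gv ^~ x).
    apply: eq_integral => x /[!inE] Dx.
    by rewrite ((cvg_limn_einf_sup (cvv x Dx)).1).
  apply: le_trans (fatou mu _ mgv gv0) _; last first.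
  rewrite limn_einf_lim; apply: lime_le; first exact: is_cvg_einfs.
  near=> N.
  apply: (@le_trans _ _ (\int[mu]_(x in `[c, d]%classic) gv N x)).
    by apply: ereal_inf_lbound; exists N => /=.
  case: (gd N) => _ _ H.
  apply: le_trans H _.
  apply: ge0_le_integral => //; try by [move=> x Dx; exact: (gw0 N x Dx) | exact: (mgw N) | exact: mcw].
  move=> x Dx; rewrite /cw lee_fin /= ler_wpM2r ?w0 // lerD2r; exact: psiN_le.
  by [].
have Tlin r : T phi 0 r = (rd phi 0 * r + phi 0)%R by rewrite /T subr0 addrC.
have iTv : mu.-integrable `[c, d]%classic (EFin \o (fun x => T phi 0 (W x) * v x)%R).
  have H := int_aff mD2 iv iW (rd phi 0%R) (phi 0%R).
  apply: eq_integrable H => // x _ /=; by rewrite Tlin.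
have iTw : mu.-integrable `[a, b]%classic (EFin \o (fun x => T phi 0 (Z x) * w x)%R).
  have H := int_aff mD1 iw iZ (rd phi 0%R) (phi 0%R).
  apply: eq_integrable H => // x _ /=; by rewrite Tlin.
have EV : Edens c d v (phi \o W) = \int[mu]_(x in `[c, d]%classic) cv x +
    \int[mu]_(x in `[c, d]%classic) (T phi 0 (W x) * v x)%R%:E.
  rewrite /Edens -int_addr //; apply: eq_integral => x _; rewrite /cv /= -EFinD; congr EFin; ring.
have EW : Edens a b w (phi \o Z) = \int[mu]_(x in `[a, b]%classic) cw x +
    \int[mu]_(x in `[a, b]%classic) (T phi 0 (Z x) * w x)%R%:E.
  rewrite /Edens -int_addr //; apply: eq_integral => x _; rewrite /cw /= -EFinD; congr EFin; ring.
have EL : \int[mu]_(x in `[c, d]%classic) (T phi 0 (W x) * v x)%R%:E =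
    \int[mu]_(x in `[a, b]%classic) (T phi 0 (Z x) * w x)%R%:E.
  transitivity (Edens c d v ((fun r => rd phi 0 * r + phi 0)%R \o W)).
    by apply: eq_integral => x _ /=; rewrite Tlin.
  by rewrite Hlin; apply: eq_integral => x _ /=; rewrite Tlin.
have K := leeD2r (\int[mu]_(x in `[c, d]%classic) (T phi 0%R (W x) * v x)%R%:E) key.
rewrite -EV EL -EW in K; exact: K.
Unshelve. all: by end_near.
Qed.
End CL.
Local Close Scope ereal_scope.
Local Open Scope ring_scope.
Section Ident.
Variable R : realType.
Variable n : nat.

Definition mka (g e : R) (c : 'I_n -> R) (j : 'I_n.+1) : R :=
  if unlift ord0 j is Some i then g * c i else e.

Lemma sum_mka (h : 'I_n.+1 -> R -> R) g e c x :
  \sum_(j < n.+1) mka g e c j * h j x = e * h ord0 x + g * \sum_(i < n) c i * h (lift ord0 i) x.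
Proof.
rewrite big_ord_recl /mka unlift_none mulr_sumr; congr (_ + _).
by apply: eq_bigr => i _; rewrite liftK mulrA.
Qed.

Lemma uncondE (h : 'I_n.+1 -> R -> R) q x :
  uncond h q x = (1 - \sum_(i < n) q i) * h ord0 x + \sum_(i < n) q i * h (lift ord0 i) x.
Proof.
rewrite /uncond big_ord_recl /full_prior unlift_none; congr (_ + _).
by apply: eq_bigr => i _; rewrite liftK.
Qed.

Lemma I1 (h : 'I_n.+1 -> R -> R) g e c x : 0 < h ord0 x ->
  (g * \sum_(i < n) c i * lratio h x i + e) * h ord0 x = \sum_(j < n.+1) mka g e c j * h j x.
Proof.
move=> h0; rewrite sum_mka.
have -> : \sum_(i < n) c i * h (lift ord0 i) x = (\sum_(i < n) c i * lratio h x i) * h ord0 x.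
  rewrite mulr_suml; apply: eq_bigr => i _; rewrite /lratio -mulrA divfK //.
  exact: lt0r_neq0.
ring.
Qed.

Lemma I2 (h : 'I_n.+1 -> R -> R) (q : 'I_n -> R) g e c x :
  0 <= 1 - \sum_(i < n) q i -> (forall i, 0 <= q i) -> (forall j, 0 <= h j x) ->
  (g * \sum_(i < n) c i * posterior h q x i + e) * uncond h q x =
  \sum_(j < n.+1) mka 1 (e * (1 - \sum_(i < n) q i)) (fun i => (g * c i + e) * q i) j * h j x.
Proof.
move=> q00 q0 hx0; rewrite sum_mka mul1r.
set s := uncond h q x.
have Hs : s = (1 - \sum_(i < n) q i) * h ord0 x + \sum_(i < n) q i * h (lift ord0 i) x.
  exact: uncondE.
have -> : \sum_(i < n) (g * c i + e) * q i * h (lift ord0 i) x =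
    g * \sum_(i < n) c i * (q i * h (lift ord0 i) x) + e * \sum_(i < n) q i * h (lift ord0 i) x.
  rewrite !mulr_sumr -big_split /=; apply: eq_bigr => i _; ring.
have -> : \sum_(i < n) c i * posterior h q x i = (\sum_(i < n) c i * (q i * h (lift ord0 i) x)) / s.
  rewrite mulr_suml; apply: eq_bigr => i _; rewrite /posterior -/s; ring.
have [s0|sn0] := eqVneq s 0.
  have t0 : 0 <= \sum_(i < n) q i * h (lift ord0 i) x.
    by apply: sumr_ge0 => i _; apply: mulr_ge0.
  have a0 : 0 <= (1 - \sum_(i < n) q i) * h ord0 x by apply: mulr_ge0.
  move: s0; rewrite Hs => /eqP; rewrite paddr_eq0 // => /andP[/eqP A /eqP B].
  have C : \sum_(i < n) c i * (q i * h (lift ord0 i) x) = 0.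
    apply: big1 => i _.
    have := psumr_eq0P (fun i (_ : true) => mulr_ge0 (q0 i) (hx0 (lift ord0 i))) B (i := i) isT.
    by move=> ->; rewrite mulr0.
  rewrite C B A.
  rewrite -mulrA A; ring.
rewrite Hs in sn0 *.
field; exact: sn0.
Qed.
End Ident.

Local Close Scope ereal_scope.
Local Open Scope ring_scope.
Local Open Scope ereal_scope.
Section Exp.
Variable R : realType.
Notation mu := (@lebesgue_measure R).
Variables (n : nat) (a b : R) (f : 'I_n.+1 -> R -> R).
Hypothesis Hf : is_experiment a b f.

Lemma exp_ge0 j x : `[a, b]%classic x -> (0 <= f j x)%R.
Proof. by move=> Dx; have [_ [H _]] := Hf j; apply: H; rewrite inE. Qed.

Lemma exp_int j : mu.-integrable `[a, b]%classic (EFin \o f j).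
Proof.
have [mf [f0 i1]] := Hf j.
apply/integrableP; split; first exact/measurable_EFinP.
have -> : \int[mu]_(x in `[a, b]%classic) `|(EFin \o f j) x| = 1.
  rewrite -i1; apply: eq_integral => x Dx /=.
  rewrite inE in Dx; by rewrite ger0_norm //; apply: f0.
exact: ltry.
Qed.

Lemma exp_lin_int (al : 'I_n.+1 -> R) :
  mu.-integrable `[a, b]%classic (EFin \o (fun x => \sum_(j < n.+1) al j * f j x)%R).
Proof.
have H : mu.-integrable `[a, b]%classic (fun x => \sum_(j < n.+1) (al j)%:E * (f j x)%:E).
  apply: integrable_sum => // j _; apply: integrableZl => //; exact: exp_int.
apply: eq_integrable H => // x _ /=.
by rewrite -sumEFin; apply: eq_bigr => j _; rewrite EFinM.
Qed.

Lemma exp_lin (al : 'I_n.+1 -> R) :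
  \int[mu]_(x in `[a, b]%classic) (\sum_(j < n.+1) al j * f j x)%R%:E = (\sum_(j < n.+1) al j)%R%:E.
Proof.
transitivity (\int[mu]_(x in `[a, b]%classic) (\sum_(j < n.+1) (al j)%:E * (f j x)%:E)).
  by apply: eq_integral => x _; rewrite -sumEFin; apply: eq_bigr => j _; rewrite EFinM.
rewrite integral_sum //; last by move=> j; apply: integrableZl => //; exact: exp_int.
rewrite -sumEFin; apply: eq_bigr => j _.
rewrite integralZl //; last exact: exp_int.
by have [_ [_ ->]] := Hf j; rewrite mule1.
Qed.
End Exp.

Local Close Scope ereal_scope.
Local Open Scope ring_scope.
Lemma convex_relu (R : realType) (g e : R) : convex_fun (fun r => Num.max (g * r + e) 0).
Proof.
move=> x y t t0 t1; rewrite ge_max; apply/andP; split.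
  have -> : g * (t * x + (1 - t) * y) + e = t * (g * x + e) + (1 - t) * (g * y + e) by ring.
  apply: lerD; apply: ler_wpM2l; rewrite ?le_max ?lexx //; lra.
apply: addr_ge0; apply: mulr_ge0; rewrite ?le_max ?lexx ?orbT //; lra.
Qed.

Lemma convex_aff (R : realType) (g e : R) : convex_fun (fun r => g * r + e).
Proof.
move=> x y t t0 t1.
have -> : g * (t * x + (1 - t) * y) + e = t * (g * x + e) + (1 - t) * (g * y + e) by ring.
exact: lexx.
Qed.

Local Open Scope ereal_scope.
Section Main.
Variable R : realType.
Notation mu := (@lebesgue_measure R).
Variable n : nat.

Definition Rl (a b : R) (f : 'I_n.+1 -> R -> R) (al : 'I_n.+1 -> R) : \bar R :=
  \int[mu]_(x in `[a, b]%classic) (Num.max (\sum_(j < n.+1) al j * f j x) 0)%R%:E.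

Lemma mka_id (al : 'I_n.+1 -> R) j : mka 1 (al ord0) (fun i => al (lift ord0 i)) j = al j.
Proof.
rewrite /mka; case: unliftP => [i ->|->] //; by rewrite mul1r.
Qed.

Section Side.
Variables (a b : R) (h : 'I_n.+1 -> R -> R).
Hypothesis Hh : is_experiment a b h.
Hypothesis h0 : forall x, x \in `[a, b] -> (0 < h ord0 x)%R.

Lemma inD x : `[a, b]%classic x -> x \in `[a, b].
Proof. by []. Qed.

Lemma lr_relu (g e : R) c :
  Edens a b (h ord0) ((fun r => Num.max (g * r + e) 0)%R \o (fun x => \sum_(i < n) c i * lratio h x i)%R)
  = Rl a b h (mka g e c).
Proof.
apply: eq_integral => x /[!inE] Dx /=; congr EFin.
rewrite maxr0M ?(exp_ge0 Hh) //; congr Num.max; apply: I1; exact: h0.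
Qed.

Lemma lr_lin (g e : R) c :
  Edens a b (h ord0) ((fun r => g * r + e)%R \o (fun x => \sum_(i < n) c i * lratio h x i)%R)
  = (\sum_(j < n.+1) mka g e c j)%:E.
Proof.
rewrite -(exp_lin Hh); apply: eq_integral => x /[!inE] Dx /=; congr EFin.
by apply: I1; exact: h0.
Qed.

Variable q : 'I_n -> R.
Hypothesis Hq : hat_simplex q.

Let q00 : (0 <= 1 - \sum_(i < n) q i)%R.
Proof. by case: Hq => _ H; rewrite subr_ge0. Qed.
Let q0 i : (0 <= q i)%R.
Proof. by case: Hq => H _; case/andP: (H i). Qed.

Lemma uncond_ge0 x : `[a, b]%classic x -> (0 <= uncond h q x)%R.
Proof.
move=> Dx; rewrite uncondE; apply: addr_ge0; first by apply: mulr_ge0 => //; exact: exp_ge0.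
by apply: sumr_ge0 => i _; apply: mulr_ge0 => //; exact: exp_ge0.
Qed.

Lemma post_relu (g e : R) c :
  Edens a b (uncond h q) ((fun r => Num.max (g * r + e) 0)%R \o (fun x => \sum_(i < n) c i * posterior h q x i)%R)
  = Rl a b h (mka 1 (e * (1 - \sum_(i < n) q i)) (fun i => (g * c i + e) * q i)%R).
Proof.
apply: eq_integral => x /[!inE] Dx /=; congr EFin.
rewrite maxr0M ?uncond_ge0 //; congr Num.max; apply: I2 => // j; exact: (exp_ge0 Hh).
Qed.

Lemma post_lin (g e : R) c :
  Edens a b (uncond h q) ((fun r => g * r + e)%R \o (fun x => \sum_(i < n) c i * posterior h q x i)%R)
  = (\sum_(j < n.+1) mka 1 (e * (1 - \sum_(i < n) q i)) (fun i => (g * c i + e) * q i)%R j)%:E.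
Proof.
rewrite -(exp_lin Hh); apply: eq_integral => x /[!inE] Dx /=; congr EFin.
apply: I2 => // j; exact: (exp_ge0 Hh).
Qed.
End Side.
End Main.

Local Close Scope ereal_scope.
Local Open Scope ring_scope.
Local Open Scope ereal_scope.
Section Final.
Variable R : realType.
Variables (n : nat) (a b c d : R) (f g : 'I_n.+1 -> R -> R).
Hypotheses (Hf : is_experiment a b f) (Hg : is_experiment c d g).
Hypotheses (hf0 : forall x, x \in `[a, b] -> (0 < f ord0 x)%R)
  (hg0 : forall y, y \in `[c, d] -> (0 < g ord0 y)%R).

Definition RD := forall al, Rl c d g al <= Rl a b f al.

Lemma lcx_RD : lcx_ge a b (f ord0) (lratio f) c d (g ord0) (lratio g) -> RD.
Proof.
move=> H al.
have := H (fun i => al (lift ord0 i)) _ (convex_relu 1 (al ord0)).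
rewrite (lr_relu Hf hf0) (lr_relu Hg hg0).
have -> // : mka 1 (al ord0) (fun i => al (lift ord0 i)) = al.
by apply: funext => j; exact: mka_id.
Qed.

Lemma RD_lcx : RD -> lcx_ge a b (f ord0) (lratio f) c d (g ord0) (lratio g).
Proof.
move=> H bv; apply: CL_main.
- by move=> x Dx; apply: ltW; apply: hf0.
- exact: exp_int.
- have Hl := exp_lin_int Hf (mka 1 0 bv).
  apply: eq_integrable Hl => // x Dx /=; congr EFin.
  rewrite -(@I1 _ _ f 1 0 bv x) ?mul1r ?addr0 //; apply: hf0; by rewrite inE in Dx.
- by move=> x Dx; apply: ltW; apply: hg0.
- exact: exp_int.
- have Hl := exp_lin_int Hg (mka 1 0 bv).
  apply: eq_integrable Hl => // x Dx /=; congr EFin.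
  rewrite -(@I1 _ _ g 1 0 bv x) ?mul1r ?addr0 //; apply: hg0; by rewrite inE in Dx.
- by move=> ga de; rewrite (lr_relu Hf hf0) (lr_relu Hg hg0); exact: H.
- by move=> ga de; rewrite (lr_lin Hf hf0) (lr_lin Hg hg0).
Qed.

Lemma RD_LB : RD -> LB_ge a b f c d g.
Proof.
move=> H q Hq bv.
have q00 : (0 <= 1 - \sum_(i < n) q i)%R by case: Hq => _ H1; rewrite subr_ge0.
have q0 i : (0 <= q i)%R by case: Hq => H1 _; case/andP: (H1 i).
apply: CL_main.
- by move=> x Dx; apply: (uncond_ge0 Hf Hq).
- exact: (exp_lin_int Hf (full_prior q)).
- have Hl := exp_lin_int Hf (mka 1 (0 * (1 - \sum_(i < n) q i)) (fun i => (1 * bv i + 0) * q i))%R.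
  apply: eq_integrable Hl => // x Dx /=; congr EFin.
  rewrite -(@I2 _ _ f q 1 0 bv x) ?mul1r ?addr0 // => j; apply: (exp_ge0 Hf); by rewrite inE in Dx.
- by move=> x Dx; apply: (uncond_ge0 Hg Hq).
- exact: (exp_lin_int Hg (full_prior q)).
- have Hl := exp_lin_int Hg (mka 1 (0 * (1 - \sum_(i < n) q i)) (fun i => (1 * bv i + 0) * q i))%R.
  apply: eq_integrable Hl => // x Dx /=; congr EFin.
  rewrite -(@I2 _ _ g q 1 0 bv x) ?mul1r ?addr0 // => j; apply: (exp_ge0 Hg); by rewrite inE in Dx.
- by move=> ga de; rewrite (post_relu Hf Hq) (post_relu Hg Hq); exact: H.
- by move=> ga de; rewrite (post_lin Hf Hq) (post_lin Hg Hq).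
Qed.

Lemma LB_RD : LB_ge a b f c d g -> RD.
Proof.
move=> H al.
pose k : R := (n.+1%:R)^-1%R.
have k0 : (0 < k)%R by rewrite invr_gt0 ltr0Sn.
pose q := fun _ : 'I_n => k.
have sq : (\sum_(i < n) q i = n%:R * k)%R by rewrite sumr_const card_ord mulr_natl.
have q0 : (1 - \sum_(i < n) q i = k)%R.
  rewrite sq /k -[X in (X - _)%R](@divff _ (n.+1%:R)) ?pnatr_eq0 //.
  by rewrite -mulrBl -natrB // subSnn mul1r.
have Hq : hat_simplex q.
  split; first by move=> i; rewrite ltW //= invf_le1 ?ltr0Sn // ler1n.
  by rewrite -subr_ge0 q0 ltW.
pose e : R := (al ord0 / k)%R.
pose bv := fun i => (al (lift ord0 i) / k - e)%R.
have := H q Hq bv _ (convex_relu 1 e).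
rewrite (post_relu Hf Hq) (post_relu Hg Hq).
have -> // : mka 1 (e * (1 - \sum_(i < n) q i)) (fun i => (1 * bv i + e) * q i)%R = al.
apply: funext => j; rewrite /mka; case: unliftP => [i ->|->].
  by rewrite mul1r /bv /q mul1r subrK divfK // lt0r_neq0.
by rewrite q0 /e divfK // lt0r_neq0.
Qed.
End Final.

Local Close Scope ereal_scope.
Unset Implicit Arguments. Set Strict Implicit.
Local Open Scope classical_set_scope.
Local Open Scope ring_scope.

Theorem proposition1 (R : realType) (n : nat) (a b c d : R)
    (f g : 'I_n.+1 -> R -> R) :
  is_experiment a b f -> is_experiment c d g ->
  (forall x, x \in `[a, b] -> 0 < f ord0 x) ->
  (forall y, y \in `[c, d] -> 0 < g ord0 y) ->
  (LB_ge a b f c d g <->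
   lcx_ge a b (f ord0) (lratio f) c d (g ord0) (lratio g)).
Proof.
move=> Hf Hg hf0 hg0; split => H.
  apply: RD_lcx => //; exact: LB_RD.
apply: RD_LB => //; exact: lcx_RD.
Qed.
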